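(* Let $Z$ be a Hilbert space and $\alpha>0$. Then the interior of $\mathcal L_{\mathrm{sa},\alpha}(Z,Z^* )$, taken in the Banach space $\mathcal L_{\mathrm{sa}}(Z,Z^* )$ equipped with the operator norm, is $$\big(\mathcal L_{\mathrm{sa},\alpha}(Z,Z^* )\big)^\circ=\bigcup_{\epsilon>0}\mathcal L_{\mathrm{sa},\alpha+\epsilon}(Z,Z^* ).$$
   Context: For a Hilbert space $Z$, identify $Z^{**}$ with $Z$ and set $\mathcal L_{\mathrm{sa}}(Z,Z^* )=\{G\in\mathcal L(Z,Z^* ): G^*=G\}$; this is a closed subspace of $\mathcal L(Z,Z^* )$, hence a Banach space with the operator norm. For $\alpha>0$ let $\mathcal L_{\mathrm{sa},\alpha}(Z,Z^* )=\{G\in\mathcal L_{\mathrm{sa}}(Z,Z^* ): \langle Gz,z\rangle\ge\alpha\|z\|_Z^2 \text{ for all } z\in Z\}$, where $\langle\cdot,\cdot\rangle$ is the duality pairing between $Z^*$ and $Z$. *)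

(* Defs.v *)
From HB Require Import structures.
From mathcomp Require Import all_boot all_order all_algebra.
From mathcomp Require Import all_classical all_reals all_analysis.
Set Implicit Arguments. Unset Strict Implicit. Unset Printing Implicit Defensive.
Import Order.TTheory GRing.Theory Num.Theory.
Import numFieldNormedType.Exports.
Local Open Scope classical_set_scope.
Local Open Scope ring_scope.

Section Defs.
Context {R : realType} {Z : normedModType R}.

Definition is_inner_product (ip : Z -> Z -> R) : Prop :=
  [/\ forall z w, ip z w = ip w z,
      forall a z1 z2 w, ip (a *: z1 + z2) w = a * ip z1 w + ip z2 w &
      forall z, ip z z = `|z| ^+ 2].

Definition lin_fun (f : Z -> R) : Prop :=
  forall a z1 z2, f (a *: z1 + z2) = a * f z1 + f z2.

Definition dual_norm (f : Z -> R) : R :=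
  sup [set `|f w| | w in [set w : Z | `|w| <= 1]].

(* An operator G : Z -> Z^* is represented by the map z |-> (w |-> <G z, w>). *)
Definition Lop (G : Z -> Z -> R) : Prop :=
  [/\ forall z, lin_fun (G z),
      forall a z1 z2 w, G (a *: z1 + z2) w = a * G z1 w + G z2 w &
      exists C : R, forall z w, `|G z w| <= C * `|z| * `|w|].

Definition op_norm (G : Z -> Z -> R) : R :=
  sup [set dual_norm (G z) | z in [set z : Z | `|z| <= 1]].

(* G^* : Z^{**} = Z -> Z^*,  <G^* z, w> = <G w, z>;  self-adjoint: G^* = G. *)
Definition adjoint (G : Z -> Z -> R) : Z -> Z -> R := fun z w => G w z.

Definition Lsa : set (Z -> Z -> R) := [set G | Lop G /\ adjoint G = G].

Definition Lsa_alpha (alpha : R) : set (Z -> Z -> R) :=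
  [set G | Lsa G /\ forall z : Z, G z z >= alpha * `|z| ^+ 2].

Definition interior_Lsa (S : set (Z -> Z -> R)) : set (Z -> Z -> R) :=
  [set G | Lsa G /\ exists2 r : R, 0 < r &
     forall H, Lsa H -> op_norm (fun z w => H z w - G z w) < r -> S H].

End Defs.

(* Main.v *)
Require Import Defs.
From HB Require Import structures.
From mathcomp Require Import all_boot all_order all_algebra.
From mathcomp Require Import all_classical all_reals all_analysis.
From mathcomp Require Import ring lra.
Import Order.TTheory GRing.Theory Num.Theory.
Import numFieldNormedType.Exports.
Local Open Scope classical_set_scope.
Local Open Scope ring_scope.

Section Helpers.
Context {R : realType} {Z : normedModType R}.

Lemma lin0 {f : Z -> R} : lin_fun f -> f 0 = 0.
Proof.
move=> hf; have := hf 1 0 0; rewrite scale1r addr0 mul1r => h; lra.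
Qed.

Lemma linZ {f : Z -> R} {a z} : lin_fun f -> f (a *: z) = a * f z.
Proof. by move=> hf; have := hf a z 0; rewrite addr0 lin0 // addr0. Qed.

Lemma linD {f : Z -> R} {z w} : lin_fun f -> f (z + w) = f z + f w.
Proof. by move=> hf; have := hf 1 z w; rewrite scale1r mul1r. Qed.

Lemma linN {f : Z -> R} {z} : lin_fun f -> f (- z) = - f z.
Proof. by move=> hf; rewrite -scaleN1r linZ // mulN1r. Qed.

Lemma dual_norm_le (f : Z -> R) B :
  (forall w, `|w| <= 1 -> `|f w| <= B) -> dual_norm f <= B.
Proof.
move=> hB; apply: ge_sup.
  by exists `|f 0|, 0 => //=; rewrite normr0.
by move=> _ [w hw <-]; exact: hB.
Qed.

Lemma op_norm_le {G : Z -> Z -> R} {B} :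
  (forall z w, `|z| <= 1 -> `|w| <= 1 -> `|G z w| <= B) -> op_norm G <= B.
Proof.
move=> hB; apply: ge_sup.
  by exists (dual_norm (G 0)), 0 => //=; rewrite normr0.
move=> _ [z hz <-]; apply: dual_norm_le => w hw; exact: hB.
Qed.

Lemma op_norm_ge {G : Z -> Z -> R} {C z w} :
  (forall z w, `|z| <= 1 -> `|w| <= 1 -> `|G z w| <= C) ->
  `|z| <= 1 -> `|w| <= 1 -> `|G z w| <= op_norm G.
Proof.
move=> hC hz hw.
have hd : forall z, `|z| <= 1 -> `|G z w| <= dual_norm (G z).
  move=> z' hz'; apply: ub_le_sup => /=; last by exists w.
  by exists C => _ [w' hw' <-]; exact: hC.
apply: le_trans (hd _ hz) _.
apply: ub_le_sup; last by exists z.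
exists C => _ [z' hz' <-]; apply: dual_norm_le => w' hw'; exact: hC.
Qed.

Definition bilin (D : Z -> Z -> R) :=
  (forall z, lin_fun (D z)) /\ (forall w, lin_fun (fun z => D z w)).

Lemma bilin_bound {D : Z -> Z -> R} {B} : bilin D ->
  (forall z w, `|z| <= 1 -> `|w| <= 1 -> `|D z w| <= B) ->
  forall z w, `|D z w| <= B * `|z| * `|w|.
Proof.
move=> [h1 h2] hB z w.
have [->|zn0] := eqVneq z 0.
  by rewrite (lin0 (h2 w)) normr0 normr0 mulr0 mul0r.
have [->|wn0] := eqVneq w 0.
  by rewrite (lin0 (h1 z)) normr0 normr0 mulr0.
have zp : 0 < `|z| by rewrite normr_gt0.
have wp : 0 < `|w| by rewrite normr_gt0.
set u := `|z|^-1 *: z; set v := `|w|^-1 *: w.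
have hu : `|u| = 1 by rewrite normrZ ger0_norm ?invr_ge0 ?ltW // mulVf // gt_eqF.
have hv : `|v| = 1 by rewrite normrZ ger0_norm ?invr_ge0 ?ltW // mulVf // gt_eqF.
have ez : z = `|z| *: u by rewrite /u scalerA divff ?gt_eqF // scale1r.
have ew : w = `|w| *: v by rewrite /v scalerA divff ?gt_eqF // scale1r.
have eD : D z w = `|z| * (`|w| * D u v).
  by rewrite {1}ez {1}ew (linZ (h2 _)) (linZ (h1 _)).
rewrite eD !normrM !normr_id.
have := hB u v; rewrite hu hv lexx => /(_ isT isT) hb.
rewrite mulrA (_ : B * `|z| * `|w| = `|z| * `|w| * B); last by ring.
by apply: ler_wpM2l => //; rewrite mulr_ge0 // ltW.
Qed.

Lemma lop_bound {G : Z -> Z -> R} : Lop G ->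
  exists C, 0 <= C /\ forall z w, `|z| <= 1 -> `|w| <= 1 -> `|G z w| <= C.
Proof.
move=> [_ _ [C hC]]; exists `|C|; split => // z w hz hw.
apply: le_trans (hC z w) _.
apply: le_trans (_ : `|C| * `|z| * `|w| <= _).
  by apply: ler_wpM2r => //; apply: ler_wpM2r => //; rewrite real_ler_norm ?num_real.
rewrite -[X in _ <= X]mulr1 -mulrA; apply: ler_wpM2l => //.
by rewrite -[1]mulr1 ler_pM.
Qed.

Lemma lop_bilin {G : Z -> Z -> R} : Lop G -> bilin G.
Proof. by move=> [h1 h2 _]; split => // w a z1 z2; exact: h2. Qed.

Lemma bilin_sub {G H : Z -> Z -> R} : bilin G -> bilin H ->
  bilin (fun z w => H z w - G z w).
Proof.
move=> [g1 g2] [h1 h2]; split.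
  by move=> z a z1 z2 /=; rewrite g1 h1; ring.
by move=> w a z1 z2 /=; rewrite g2 h2; ring.
Qed.

End Helpers.

Theorem lemma2p3 (R : realType) (Z : completeNormedModType R)
    (ip : Z -> Z -> R) (hip : is_inner_product ip) (alpha : R) (halpha : 0 < alpha) :
  @interior_Lsa R Z (@Lsa_alpha R Z alpha) =
  \bigcup_(eps in [set e : R | 0 < e]) @Lsa_alpha R Z (alpha + eps).
Proof.
case: hip => ipC ipL ipN.
have ipbil : bilin ip.
  split; last by move=> w a z1 z2; exact: ipL.
  by move=> z a z1 z2; rewrite ipC ipL (ipC z1) (ipC z2).
have ipCS : forall z w, `|ip z w| <= 1 * `|z| * `|w|.
  apply: bilin_bound => // u v hu hv.
  have e1 : ip (u + v) (u + v) = ip u u + 2 * ip u v + ip v v.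
    rewrite (linD (ipbil.2 _)) (linD (ipbil.1 _)) (linD (ipbil.1 _)).
    rewrite (ipC v u); ring.
  have e2 : ip (u - v) (u - v) = ip u u - 2 * ip u v + ip v v.
    rewrite (linD (ipbil.2 _)) (linD (ipbil.1 _)) (linD (ipbil.1 _)).
    have n1 : forall a b, ip (- a) b = - ip a b by move=> a b; exact: (linN (ipbil.2 b)).
    have n2 : forall a b, ip a (- b) = - ip a b by move=> a b; exact: (linN (ipbil.1 a)).
    rewrite !n1 !n2 (ipC v u); ring.
  have p1 : 0 <= ip (u + v) (u + v) by rewrite ipN sqr_ge0.
  have p2 : 0 <= ip (u - v) (u - v) by rewrite ipN sqr_ge0.
  rewrite e1 !ipN in p1; rewrite e2 !ipN in p2.
  have hu0 := normr_ge0 u; have hv0 := normr_ge0 v.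
  have q1 : `|u| ^+ 2 <= 1 by rewrite expr_le1.
  have q2 : `|v| ^+ 2 <= 1 by rewrite expr_le1.
  rewrite ler_norml; apply/andP; split; lra.
apply/seteqP; split.
- move=> G [hG [r r0 hr]].
  have hGb := lop_bilin hG.1.
  set c := r / 2.
  have c0 : 0 < c by rewrite /c divr_gt0.
  pose H := fun z w => G z w - c * ip z w.
  have hH : Lsa H.
    split.
      split.
      + by move=> z a z1 z2; rewrite /H hGb.1 ipbil.1; ring.
      + by move=> a z1 z2 w; rewrite /H hGb.2 ipbil.2; ring.
      + case: (lop_bound hG.1) => C [C0 hC].
        exists (C + c) => z w.
        have := bilin_bound hGb hC z w.
        have := ipCS z w; rewrite /H => h1 h2.
        apply: le_trans (ler_normB _ _) _.
        rewrite normrM (gtr0_norm c0) mulrDl mulrDl; apply: lerD => //.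
        by rewrite -mulrA; apply: ler_wpM2l; [exact: ltW | rewrite mul1r in h1].
    apply: funext => z; apply: funext => w.
    have e := congr1 (fun f => f z w) hG.2; rewrite /adjoint /= in e.
    by rewrite /adjoint /H e (ipC w z).
  have := hr H hH.
  have hn : op_norm (fun z w => H z w - G z w) < r.
    apply: le_lt_trans (op_norm_le (B := c) _) _.
      move=> z w hz hw; rewrite /H addrAC subrr add0r normrN normrM gtr0_norm //.
      rewrite -[X in _ <= X]mulr1; apply: ler_wpM2l; first exact: ltW.
      apply: le_trans (ipCS z w) _.
      by rewrite mul1r -[1]mulr1 ler_pM.
    by rewrite /c ltr_pdivrMr // ltr_pMr // ltr1n.
  move=> /(_ hn) [_ hHa].
  exists c => //; split => // z.
  have := hHa z; rewrite /H ipN mulrDl.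
  move: (alpha * _) (c * _) (G z z) => A B X; lra.
- move=> G [e /= e0 [hG hGa]].
  split => //; exists e => // H hH hn; split => // z.
  have hb := lop_bilin hH.1; have hgb := lop_bilin hG.1.
  have hD := bilin_sub hgb hb.
  have [CH [_ hCH]] := lop_bound hH.1.
  have [CG [_ hCG]] := lop_bound hG.1.
  have hDb : forall z w, `|z| <= 1 -> `|w| <= 1 -> `|H z w - G z w| <= CH + CG.
    by move=> z' w hz hw; apply: le_trans (ler_normB _ _) _; apply: lerD; [exact: hCH | exact: hCG].
  have := bilin_bound hD (B := op_norm (fun z w => H z w - G z w)) _ z z.
  move=> /(_ (fun z w hz hw => op_norm_ge hDb hz hw)) hq.
  have := hGa z; rewrite ler_norml in hq; case/andP: hq => hq _.
  have hz2 : 0 <= `|z| * `|z| by rewrite mulr_ge0.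
  have : op_norm (fun z w => H z w - G z w) * `|z| * `|z| <= e * (`|z| * `|z|).
    by rewrite -mulrA; apply: ler_wpM2r => //; exact: ltW.
  move=> h3 h4; rewrite -mulrA in hq h3; rewrite expr2 in h4 *; rewrite mulrDl in h4.
  move: hq h3 h4.
  move: (op_norm _ * _) (e * _) (alpha * _) (H z z) (G z z) => P E A Hz Gz; lra.
Qed.
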